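(* Let $I\subset\mathbb{R}$ be an open interval, let $\bm{a}:I\to\mathbb{R}^2_1$ be a (spacelike or timelike) frontal with Gauss mapping $\bm{\nu}:I\to H^1$ (or $S^1_1$), and let $r:I\to\mathbb{R}^+$ be a smooth positive function. Then the pseudo-circle family $C_{(\bm{a}(t),\pm r(t))}$ creates an envelope if and only if $C_{(\bm{a}(t),\pm r(t))}$ is creative.
   Context: All objects are $C^\infty$. The Minkowski plane $\mathbb{R}^2_1$ is $\mathbb{R}^2$ with the pseudo-scalar product $\langle\bm{x},\bm{y}\rangle=-x_1y_1+x_2y_2$. Set $S^1_1=\{\bm{x}:\langle\bm{x},\bm{x}\rangle=1\}$ and $H^1=\{\bm{x}:\langle\bm{x},\bm{x}\rangle=-1\}$. For a non-lightlike vector $\bm{x}$, $\epsilon_{\bm{x}}=1$ if $\langle\bm{x},\bm{x}\rangle>0$ and $\epsilon_{\bm{x}}=-1$ if $\langle\bm{x},\bm{x}\rangle<0$. A smooth curve $\bm{a}:I\to\mathbb{R}^2_1$ is a spacelike (resp. timelike) frontal if there is a smooth map $\bm{\nu}:I\to H^1$ (resp. $S^1_1$), the Gauss mapping, with $\langle \frac{d\bm{a}}{dt}(t),\bm{\nu}(t)\rangle=0$ for all $t$. Let $\bm{\mu}:I\to S^1_1$ (resp. $H^1$) be a smooth unit vector field with $\langle\bm{\mu},\bm{\nu}\rangle=0$; then $\frac{d\bm{a}}{dt}(t)=\beta(t)\bm{\mu}(t)$ where $\beta(t)=\epsilon_{\bm{\mu}}\langle\bm{\mu}(t),\frac{d\bm{a}}{dt}(t)\rangle$.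 For a positive function $r$, the pseudo-circle families are $C_{(\bm{a}(t),r(t))}=\{\bm{x}:\langle\bm{x}-\bm{a}(t),\bm{x}-\bm{a}(t)\rangle=r(t)^2\}$ and $C_{(\bm{a}(t),-r(t))}=\{\bm{x}:\langle\bm{x}-\bm{a}(t),\bm{x}-\bm{a}(t)\rangle=-r(t)^2\}$. An envelope of $C_{(\bm{a}(t),\pm r(t))}$ is a smooth map $f:I\to\mathbb{R}^2_1$ with (1) $f(t)\in C_{(\bm{a}(t),\pm r(t))}$ and (2) $\langle\frac{df}{dt}(t),f(t)-\bm{a}(t)\rangle=0$ for all $t\in I$. The family $C_{(\bm{a}(t),r(t))}$ is creative if there is a smooth $\tilde{\bm{\nu}}:I\to S^1_1$ with $\frac{dr}{dt}(t)+\beta(t)\langle\tilde{\bm{\nu}}(t),\bm{\mu}(t)\rangle=0$ for all $t$; the family $C_{(\bm{a}(t),-r(t))}$ is creative if there is a smooth $\tilde{\bm{\nu}}:I\to H^1$ with $\frac{dr}{dt}(t)-\beta(t)\langle\tilde{\bm{\nu}}(t),\bm{\mu}(t)\rangle=0$ for all $t$. *)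

(* Defs.v *)
From Stdlib Require Import Reals.
From Coquelicot Require Import Coquelicot.
Open Scope R_scope.

Definition mink (x y : R * R) : R := - fst x * fst y + snd x * snd y.
Definition vsub (x y : R * R) : R * R := (fst x - fst y, snd x - snd y).

Definition in_S11 (x : R * R) : Prop := mink x x = 1.
Definition in_H1 (x : R * R) : Prop := mink x x = -1.

Definition eps (x : R * R) : R := if Rlt_dec 0 (mink x x) then 1 else -1.

Definition open_int (lo hi : Rbar) (t : R) : Prop := Rbar_lt lo t /\ Rbar_lt t hi.

Definition smooth_on (I : R -> Prop) (f : R -> R) : Prop :=
  forall (n : nat) (t : R), I t -> ex_derive_n f n t.

Definition smooth_curve (I : R -> Prop) (c : R -> R * R) : Prop :=
  smooth_on I (fun t => fst (c t)) /\ smooth_on I (fun t => snd (c t)).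

Definition dcurve (c : R -> R * R) (t : R) : R * R :=
  (Derive (fun s => fst (c s)) t, Derive (fun s => snd (c s)) t).

Definition gauss_map (spacelike : bool) (I : R -> Prop) (a nu : R -> R * R) : Prop :=
  smooth_curve I nu /\
  (forall t, I t -> (if spacelike then in_H1 (nu t) else in_S11 (nu t))) /\
  (forall t, I t -> mink (dcurve a t) (nu t) = 0).

Definition unit_tangent (spacelike : bool) (I : R -> Prop) (nu mu : R -> R * R) : Prop :=
  smooth_curve I mu /\
  (forall t, I t -> (if spacelike then in_S11 (mu t) else in_H1 (mu t))) /\
  (forall t, I t -> mink (mu t) (nu t) = 0).

Definition beta (a mu : R -> R * R) (t : R) : R := eps (mu t) * mink (mu t) (dcurve a t).

(* Envelope of C_(a(t), r(t)) (s = 1) or C_(a(t), -r(t)) (s = -1). *)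
Definition is_envelope (I : R -> Prop) (s : R) (a : R -> R * R) (r : R -> R)
  (f : R -> R * R) : Prop :=
  smooth_curve I f /\
  (forall t, I t -> mink (vsub (f t) (a t)) (vsub (f t) (a t)) = s * (r t) ^ 2) /\
  (forall t, I t -> mink (dcurve f t) (vsub (f t) (a t)) = 0).

Definition creates_envelope (I : R -> Prop) (s : R) (a : R -> R * R) (r : R -> R) : Prop :=
  exists f, is_envelope I s a r f.

Definition creative_plus (I : R -> Prop) (a mu : R -> R * R) (r : R -> R) : Prop :=
  exists nt : R -> R * R, smooth_curve I nt /\
    (forall t, I t -> in_S11 (nt t)) /\
    (forall t, I t -> Derive r t + beta a mu t * mink (nt t) (mu t) = 0).

Definition creative_minus (I : R -> Prop) (a mu : R -> R * R) (r : R -> R) : Prop :=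
  exists nt : R -> R * R, smooth_curve I nt /\
    (forall t, I t -> in_H1 (nt t)) /\
    (forall t, I t -> Derive r t - beta a mu t * mink (nt t) (mu t) = 0).

(* Main.v *)
Require Import Defs.
From Stdlib Require Import Reals Lra Lia.
From Coquelicot Require Import Coquelicot.
Open Scope R_scope.

Section Cn.
Variable U : R -> Prop.
Hypothesis HU : forall t, U t -> locally t U.

Definition Cn (n : nat) (f : R -> R) : Prop :=
  forall k, (k <= n)%nat -> forall t, U t -> ex_derive_n f k t.

Lemma Derive_n_Derive f n x : Derive_n (Derive f) n x = Derive_n f (S n) x.
Proof.
  revert x; induction n as [|n IH]; intro x; simpl. reflexivity.
  apply Derive_ext. intro y. rewrite IH. reflexivity.
Qed.

Lemma Cn_le n m f : (m <= n)%nat -> Cn n f -> Cn m f.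
Proof. intros Hmn H k Hk t Ht. apply H; [lia|exact Ht]. Qed.

Lemma Cn_deriv n f : Cn (S n) f -> Cn n (Derive f).
Proof.
  intros H k Hk t Ht. destruct k as [|k]. exact I.
  simpl. apply ex_derive_ext with (f := Derive_n f (S k)).
  intro y. now rewrite Derive_n_Derive.
  exact (H (S (S k)) ltac:(lia) t Ht).
Qed.

Lemma Cn_of_deriv n f : (forall t, U t -> ex_derive f t) -> Cn n (Derive f) -> Cn (S n) f.
Proof.
  intros H1 H k Hk t Ht. destruct k as [|k]. exact I.
  destruct k as [|k]. simpl. apply ex_derive_ext with (f := f). reflexivity. now apply H1.
  change (ex_derive (Derive_n f (S k)) t).
  apply ex_derive_ext with (f := Derive_n (Derive f) k).
  intro y. now rewrite Derive_n_Derive.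
  exact (H (S k) ltac:(lia) t Ht).
Qed.

Lemma Cn_ext n f g : (forall t, U t -> f t = g t) -> Cn n f -> Cn n g.
Proof.
  intros He H k Hk t Ht. apply ex_derive_n_ext_loc with (f := f).
  apply filter_imp with (P := U). intros; now apply He. now apply HU.
  now apply H.
Qed.

Lemma Cn_loc n f t : Cn n f -> U t ->
  locally t (fun y => forall k, (k <= n)%nat -> ex_derive_n f k y).
Proof.
  intros H Ht. apply filter_imp with (P := U). intros y Hy k Hk. now apply H. now apply HU.
Qed.

Lemma Cn_plus n f g : Cn n f -> Cn n g -> Cn n (fun x => f x + g x).
Proof.
  intros Hf Hg k Hk t Ht. apply ex_derive_n_plus.
  apply filter_imp with (2 := Cn_loc n f t Hf Ht). intros y Hy j Hj; apply Hy; lia.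
  apply filter_imp with (2 := Cn_loc n g t Hg Ht). intros y Hy j Hj; apply Hy; lia.
Qed.

Lemma Cn_opp n f : Cn n f -> Cn n (fun x => - f x).
Proof. intros Hf k Hk t Ht. apply ex_derive_n_opp. now apply Hf. Qed.

Lemma Cn_const n c : Cn n (fun _ => c).
Proof. intros k Hk t Ht. apply ex_derive_n_const. Qed.

Lemma Cn_ex_derive n f t : Cn (S n) f -> U t -> ex_derive f t.
Proof.
  intros H Ht. apply ex_derive_ext with (f := Derive_n f 0). reflexivity.
  exact (H 1%nat ltac:(lia) t Ht).
Qed.

Lemma Cn_mult n : forall f g, Cn n f -> Cn n g -> Cn n (fun x => f x * g x).
Proof.
  induction n as [|n IH]; intros f g Hf Hg.
  - intros k Hk t Ht. replace k with 0%nat by lia. exact I.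
  - apply Cn_of_deriv.
    + intros t Ht. apply ex_derive_mult; eapply Cn_ex_derive; eauto.
    + apply Cn_ext with (f := fun x => Derive f x * g x + f x * Derive g x).
      intros t Ht. rewrite Derive_mult. reflexivity.
      eapply Cn_ex_derive; eauto. eapply Cn_ex_derive; eauto.
      apply Cn_plus; apply IH.
      now apply Cn_deriv. apply Cn_le with (S n). lia. exact Hg.
      apply Cn_le with (S n). lia. exact Hf. now apply Cn_deriv.
Qed.

Lemma Cn_inv n : forall f, Cn n f -> (forall t, U t -> f t <> 0) -> Cn n (fun x => / f x).
Proof.
  induction n as [|n IH]; intros f Hf Hnz.
  - intros k Hk t Ht. replace k with 0%nat by lia. exact I.
  - apply Cn_of_deriv.
    + intros t Ht. apply ex_derive_inv. eapply Cn_ex_derive; eauto. now apply Hnz.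
    + apply Cn_ext with (f := fun x => - (Derive f x * (/ f x * / f x))).
      intros t Ht. rewrite Derive_inv. field. now apply Hnz.
      eapply Cn_ex_derive; eauto. now apply Hnz.
      apply Cn_opp. apply Cn_mult. now apply Cn_deriv.
      apply Cn_mult; apply IH; auto; apply Cn_le with (S n); auto.
Qed.

End Cn.

Lemma alg_tangent n1 n2 m1 m2 v1 v2 tau :
  (-n1*n1 + n2*n2 = 1 \/ -n1*n1 + n2*n2 = -1) ->
  (tau = 1 \/ tau = -1) -> -m1*m1 + m2*m2 = tau ->
  -v1*n1 + v2*n2 = 0 -> -m1*n1 + m2*n2 = 0 ->
  v1 = tau * (-m1*v1 + m2*v2) * m1 /\ v2 = tau * (-m1*v1 + m2*v2) * m2.
Proof.
  intros Hn Ht Hm Hv Hmn.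
  assert (Hc : v1*m2 - v2*m1 = 0).
  { assert (E1 : (v1*m2 - v2*m1) * n1 = 0).
    { replace ((v1*m2 - v2*m1) * n1) with (m2*(v1*n1) - v1*(m1*n1) + v1*(m1*n1) - v2*(m1*n1)) by ring.
      replace (v1*n1) with (v2*n2) by lra. replace (m1*n1) with (m2*n2) by lra. ring. }
    assert (E2 : (v1*m2 - v2*m1) * n2 = 0).
    { replace ((v1*m2 - v2*m1) * n2) with (v1*(m2*n2) - m1*(v2*n2)) by ring.
      replace (v2*n2) with (v1*n1) by lra. replace (m2*n2) with (m1*n1) by lra. ring. }
    destruct (Req_dec n1 0) as [H1|H1].
    - subst n1. destruct (Req_dec n2 0) as [H2|H2]. subst n2. lra.
      apply Rmult_integral in E2. destruct E2; [assumption|contradiction].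
    - apply Rmult_integral in E1. destruct E1; [assumption|contradiction]. }
  assert (Htt : tau * tau = 1) by (destruct Ht; subst; lra).
  split.
  - replace (tau * (-m1*v1 + m2*v2) * m1) with (tau * (-m1*m1*v1 + m2*(m1*v2))) by ring.
    replace (m1*v2) with (v1*m2) by lra.
    replace (tau * (- m1 * m1 * v1 + m2 * (v1 * m2))) with (tau * (-m1*m1 + m2*m2) * v1) by ring.
    rewrite Hm, Htt. ring.
  - replace (tau * (-m1*v1 + m2*v2) * m2) with (tau * (-m1*(v1*m2) + m2*m2*v2)) by ring.
    replace (v1*m2) with (v2*m1) by lra.
    replace (tau * (- m1 * (v2 * m1) + m2 * m2 * v2)) with (tau * (-m1*m1 + m2*m2) * v2) by ring.
    rewrite Hm, Htt. ring.
Qed.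

Lemma tangent (I : R -> Prop) spacelike a nu mu t :
  gauss_map spacelike I a nu -> unit_tangent spacelike I nu mu -> I t ->
  forall w, mink (dcurve a t) w = beta a mu t * mink (mu t) w.
Proof.
  intros [_ [Hn Ha]] [_ [Hm Hmn]] Ht w.
  specialize (Hn t Ht). specialize (Ha t Ht). specialize (Hm t Ht). specialize (Hmn t Ht).
  unfold beta, eps.
  destruct (dcurve a t) as [v1 v2] eqn:Ev. destruct (nu t) as [n1 n2]. destruct (mu t) as [m1 m2].
  destruct w as [w1 w2].
  unfold mink in *; simpl in *.
  set (tau := if Rlt_dec 0 (- m1 * m1 + m2 * m2) then 1 else -1).
  assert (Htau : -m1*m1 + m2*m2 = tau /\ (tau = 1 \/ tau = -1)).
  { unfold tau; destruct spacelike; unfold in_H1, in_S11, mink in *; simpl in *;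
    destruct (Rlt_dec _ _); lra. }
  destruct Htau as [Htau Ht1].
  assert (Hnn : -n1*n1 + n2*n2 = 1 \/ -n1*n1 + n2*n2 = -1).
  { destruct spacelike; unfold in_H1, in_S11, mink in *; simpl in *; lra. }
  destruct (alg_tangent n1 n2 m1 m2 v1 v2 tau Hnn Ht1 Htau Ha Hmn) as [E1 E2].
  fold tau. rewrite E1 at 1. rewrite E2 at 2. ring.
Qed.

Lemma smooth_Cn U f : smooth_on U f -> forall n, Cn U n f.
Proof. intros H n k _ t Ht. now apply H. Qed.
Lemma Cn_smooth U f : (forall n, Cn U n f) -> smooth_on U f.
Proof. intros H n t Ht. exact (H n n (le_n n) t Ht). Qed.

Lemma key (U : R -> Prop) (HU : forall t, U t -> locally t U) s a r nt f t :
  smooth_curve U a -> smooth_on U r -> smooth_curve U nt ->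
  (forall x, U x -> mink (nt x) (nt x) = s) ->
  (forall x, U x -> f x = (fst (a x) + r x * fst (nt x), snd (a x) + r x * snd (nt x))) ->
  U t ->
  mink (dcurve f t) (vsub (f t) (a t)) = r t * (mink (dcurve a t) (nt t) + s * Derive r t).
Proof.
  intros [Ha1 Ha2] Hr [Hn1 Hn2] Hs Hf Ht.
  assert (D : forall g, smooth_on U g -> ex_derive g t).
  { intros g Hg. apply (Cn_ex_derive U 0). apply smooth_Cn; auto. auto. }
  assert (E1 : Derive (fun x => fst (f x)) t =
     Derive (fun x => fst (a x)) t + (Derive r t * fst (nt t) + r t * Derive (fun x => fst (nt x)) t)).
  { rewrite (Derive_ext_loc _ (fun x => fst (a x) + r x * fst (nt x))).
    rewrite Derive_plus, Derive_mult; auto. apply ex_derive_mult; auto.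
    apply filter_imp with (2 := HU t Ht). intros x Hx. now rewrite (Hf x Hx). }
  assert (E2 : Derive (fun x => snd (f x)) t =
     Derive (fun x => snd (a x)) t + (Derive r t * snd (nt t) + r t * Derive (fun x => snd (nt x)) t)).
  { rewrite (Derive_ext_loc _ (fun x => snd (a x) + r x * snd (nt x))).
    rewrite Derive_plus, Derive_mult; auto. apply ex_derive_mult; auto.
    apply filter_imp with (2 := HU t Ht). intros x Hx. now rewrite (Hf x Hx). }
  assert (E3 : Derive (fun x => snd (nt x) * snd (nt x) - fst (nt x) * fst (nt x)) t = 0).
  { rewrite (Derive_ext_loc _ (fun _ => s)). apply Derive_const.
    apply filter_imp with (2 := HU t Ht). intros x Hx. rewrite <- (Hs x Hx). unfold mink. lra. }
  rewrite Derive_minus, !Derive_mult in E3; auto.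
  2,3: apply ex_derive_mult; auto.
  specialize (Hs t Ht). rewrite (Hf t Ht) in *.
  unfold mink, dcurve, vsub in *. simpl in *. rewrite E1, E2.
  destruct (nt t) as [p q]. simpl in *.
  set (dn1 := Derive (fun x => fst (nt x)) t) in *.
  set (dn2 := Derive (fun x => snd (nt x)) t) in *.
  rewrite <- Hs.
  replace (- (Derive (fun x : R => fst (a x)) t + (Derive r t * p + r t * dn1)) *
   (fst (a t) + r t * p - fst (a t)) +
   (Derive (fun x : R => snd (a x)) t + (Derive r t * q + r t * dn2)) *
   (snd (a t) + r t * q - snd (a t)))
  with (r t * (- Derive (fun x : R => fst (a x)) t * p + Derive (fun x : R => snd (a x)) t * q
     + (- p * p + q * q) * Derive r t) + r t * r t * ((dn2 * q + q * dn2 - (dn1 * p + p * dn1)) / 2)) by field.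
  rewrite E3. unfold Rdiv. rewrite Rmult_0_l, Rmult_0_r, Rplus_0_r. reflexivity.
Qed.

Lemma env_iff (U : R -> Prop) (HU : forall t, U t -> locally t U) spacelike a nu mu r s :
  (s = 1 \/ s = -1) ->
  smooth_curve U a -> gauss_map spacelike U a nu -> unit_tangent spacelike U nu mu ->
  smooth_on U r -> (forall t, U t -> 0 < r t) ->
  (creates_envelope U s a r <->
   exists nt, smooth_curve U nt /\ (forall t, U t -> mink (nt t) (nt t) = s) /\
     (forall t, U t -> s * Derive r t + beta a mu t * mink (nt t) (mu t) = 0)).
Proof.
  intros Hs Ha Hg Hm Hr Hpos.
  assert (Hss : s * s = 1) by (destruct Hs; subst; lra).
  assert (Hrn : forall t, U t -> r t <> 0) by (intros t Ht; specialize (Hpos t Ht); lra).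
  assert (Hrs : forall n, Cn U n r) by (apply smooth_Cn; auto).
  assert (Hri : forall n, Cn U n (fun x => / r x)) by (intro n; apply Cn_inv; auto).
  destruct Ha as [Ha1 Ha2].
  pose proof (smooth_Cn _ _ Ha1) as Ca1. pose proof (smooth_Cn _ _ Ha2) as Ca2.
  split.
  - intros [f [[Hf1 Hf2] [Hfr Hfo]]].
    pose proof (smooth_Cn _ _ Hf1) as Cf1. pose proof (smooth_Cn _ _ Hf2) as Cf2.
    set (nt := fun x => ((fst (f x) - fst (a x)) * / r x, (snd (f x) - snd (a x)) * / r x)).
    assert (Snt : smooth_curve U nt).
    { split; apply Cn_smooth; intro n; unfold nt; simpl; apply Cn_mult; auto;
      unfold Rminus; apply Cn_plus; auto; apply Cn_opp; auto. }
    assert (Nnt : forall x, U x -> mink (nt x) (nt x) = s).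
    { intros x Hx. specialize (Hfr x Hx). specialize (Hrn x Hx).
      unfold mink, vsub, nt in *; cbn [fst snd] in *.
      apply Rmult_eq_reg_r with (r x ^ 2). 2: now apply pow_nonzero.
      rewrite <- Hfr. field. auto. }
    exists nt. split; [exact Snt|]. split; [exact Nnt|].
    intros t Ht.
    assert (K := key U HU s a r nt f t (conj Ha1 Ha2) Hr Snt Nnt).
    rewrite Hfo in K by auto.
    rewrite (tangent U spacelike a nu mu t Hg Hm Ht) in K.
    assert (K2 : 0 = r t * (beta a mu t * mink (mu t) (nt t) + s * Derive r t)).
    { apply K; auto. intros x Hx. unfold nt. specialize (Hrn x Hx).
      destruct (f x) as [f1 f2]; simpl. f_equal; field; auto. }
    symmetry in K2. apply Rmult_integral in K2. destruct K2 as [K2|K2].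
    + exfalso; now apply (Hrn t).
    + unfold mink in *. lra.
  - intros [nt [[Hn1 Hn2] [Nnt Hc]]].
    pose proof (smooth_Cn _ _ Hn1) as Cn1. pose proof (smooth_Cn _ _ Hn2) as Cn2.
    set (f := fun x => (fst (a x) + r x * fst (nt x), snd (a x) + r x * snd (nt x))).
    exists f. split; [|split].
    + split; apply Cn_smooth; intro n; unfold f; simpl; apply Cn_plus; auto; apply Cn_mult; auto.
    + intros t Ht. specialize (Nnt t Ht). unfold mink, vsub, f in *; simpl in *.
      rewrite <- Nnt. ring.
    + intros t Ht.
      rewrite (key U HU s a r nt f t (conj Ha1 Ha2) Hr (conj Hn1 Hn2) Nnt) by (auto; intros; reflexivity).
      rewrite (tangent U spacelike a nu mu t Hg Hm Ht).
      specialize (Hc t Ht).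
      replace (mink (mu t) (nt t)) with (mink (nt t) (mu t)) by (unfold mink; ring).
      rewrite Rplus_comm, Hc. ring.
Qed.

Theorem theorem1 (lo hi : Rbar) (spacelike : bool) (a nu mu : R -> R * R) (r : R -> R) :
  Rbar_lt lo hi ->
  smooth_curve (open_int lo hi) a ->
  gauss_map spacelike (open_int lo hi) a nu ->
  unit_tangent spacelike (open_int lo hi) nu mu ->
  smooth_on (open_int lo hi) r ->
  (forall t, open_int lo hi t -> 0 < r t) ->
  (creates_envelope (open_int lo hi) 1 a r <-> creative_plus (open_int lo hi) a mu r) /\
  (creates_envelope (open_int lo hi) (-1) a r <-> creative_minus (open_int lo hi) a mu r).
Proof.
  intros _ Ha Hg Hm Hr Hpos.
  assert (HU : forall t, open_int lo hi t -> locally t (open_int lo hi)).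
  { apply (open_and (fun u : R => Rbar_lt lo u) (fun u : R => Rbar_lt u hi)).
    apply open_Rbar_gt. apply open_Rbar_lt. }
  split.
  - rewrite (env_iff _ HU spacelike a nu mu r 1 (or_introl eq_refl) Ha Hg Hm Hr Hpos).
    unfold creative_plus, in_S11.
    split; intros [nt [H1 [H2 H3]]]; exists nt; (split; [exact H1|split; [exact H2|]]);
      intros t Ht; specialize (H3 t Ht); lra.
  - rewrite (env_iff _ HU spacelike a nu mu r (-1) (or_intror eq_refl) Ha Hg Hm Hr Hpos).
    unfold creative_minus, in_H1.
    split; intros [nt [H1 [H2 H3]]]; exists nt; (split; [exact H1|split; [exact H2|]]);
      intros t Ht; specialize (H3 t Ht); lra.
Qed.
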